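(* In the setting below, for every $m\in\mathbb N$ with $1\le m\le nN$, $$\mathbb P(X_m\ge1)\ge\min\Big\{\frac{m}{2N},\frac{1}{2C_G}\Big\}\,\mathbb P(X_{\ell N}\ge1),$$ and for all $k,m\in\mathbb N$ with $2kN\le m\le nN$, $$\mathbb P(X_m\ge k)\ge\frac{\mathbb P(X_{\ell N}\ge k)}{2+4C_G}.$$
   Context: Let $n,N\in\mathbb N$, $I=\{1,\dots,n\}$, $J=\{1,\dots,N\}$, $G$ a nonempty finite set of maps $I\to J$, $\mathbb P$ the normalized counting measure on $G$ ($\mathbb P(E)=|E|/|G|$) and $\mathbb E$ its expectation. Assume there is a constant $C_G\ge1$ such that for all $i\in I,j\in J$, $\mathbb P(g(i)=j)=1/N$, and for all pairs $(i_1,j_1)\ne(i_2,j_2)$ in $I\times J$, $\mathbb P(g(i_1)=j_1,g(i_2)=j_2)\le C_G/N^2$. Fix an integer $1\le\ell\le n$ and a matrix $a\in\mathbb R^{n\times N}$ with non-negative entries, and let $h:\{1,\dots,nN\}\to I\times J$ be a bijection with $a(h(j))\ge a(h(j+1))$ for $1\le j<\ell N$ and $a(h(j))=0$ for $\ell N<j\le nN$ (here $a(i,j)=a_{ij}$). Identify each $g\in G$ with its graph $\{(i,g(i)):i\in I\}$. For $1\le j\le nN$ let $Y_j(g)=1$ if $h(j)\in g$ and $Y_j(g)=0$ otherwise, and for $1\le m\le nN$ let $X_m(g)=\sum_{j=1}^mY_j(g)=|h(\{1,\dots,m\})\cap g|$. *)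

(* Defs.v *)
From HB Require Import structures.
From mathcomp Require Import all_boot all_order all_algebra.
Set Implicit Arguments. Unset Strict Implicit. Unset Printing Implicit Defensive.
Import Order.TTheory GRing.Theory Num.Theory.
Local Open Scope ring_scope.

Definition Prob (R : numFieldType) (n N : nat)
  (G : {set {ffun 'I_n -> 'I_N}}) (E : pred {ffun 'I_n -> 'I_N}) : R :=
  (#|[set g in G | E g]|)%:R / (#|G|)%:R.

(* X_m(g) = |h({1..m}) ∩ graph g|; the index j of the paper (1-based)
   corresponds to the ordinal j-1 here, so h({1..m}) = h({k | k < m}). *)
Definition Xcount (n N : nat) (h : 'I_(n * N) -> 'I_n * 'I_N) (m : nat)
  (g : {ffun 'I_n -> 'I_N}) : nat :=
  #|[set k : 'I_(n * N) | (k < m)%N && (g (h k).1 == (h k).2)]|.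

(* Main.v *)
Require Import Defs.
From HB Require Import structures.
From mathcomp Require Import all_boot all_order all_algebra.
From mathcomp Require Import ring lra zify.
Import Order.TTheory GRing.Theory Num.Theory.
Local Open Scope ring_scope.

Section Aux.
Variables (R : realFieldType) (n N : nat).
Local Notation F := {ffun 'I_n -> 'I_N}.

Lemma card_sum (G : {set F}) (P : pred F) :
  (#|[set g in G | P g]|)%:R = \sum_(g in G) (P g)%:R :> R.
Proof.
rewrite -sum1_card natr_sum big_mkcond /= [RHS]big_mkcond /=.
apply: eq_bigr => g _; rewrite inE; by case: (g \in G); case: (P g).
Qed.

Variable (h : 'I_(n * N) -> 'I_n * 'I_N).

Lemma Xcount_sum m g :
  (Xcount h m g)%:R = \sum_(k : 'I_(n * N) | (k < m)%N) (g (h k).1 == (h k).2)%:R :> R.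
Proof.
rewrite /Xcount -sum1_card natr_sum big_mkcond /= [RHS]big_mkcond /=.
apply: eq_bigr => k _; rewrite inE; by case: (k < m)%N; case: (_ == _).
Qed.

Lemma sum_lt m (c : R) : (m <= n * N)%N ->
  \sum_(k : 'I_(n * N) | (k < m)%N) c = c * m%:R.
Proof.
move=> hm.
rewrite -(big_mkord (fun k => (k < m)%N) (fun _ => c)).
have E := big_nat_widen 0 m (n*N) xpredT (fun _ => c) hm.
rewrite /= in E; rewrite -E sumr_const_nat subn0.
by rewrite mulr_natr.
Qed.

Variables (G : {set F}) (C : R).
Local Notation Gm := ((#|G|)%:R : R).
Hypothesis hC : 0 <= C.
Hypothesis hinj : injective h.
Hypothesis hm1 : forall i j, \sum_(g in G) (g i == j)%:R = Gm / N%:R.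
Hypothesis hp1 : forall (i1 i2 : 'I_n) (j1 j2 : 'I_N), (i1, j1) != (i2, j2) ->
  \sum_(g in G) ((g i1 == j1) && (g i2 == j2))%:R <= Gm * C / N%:R ^+ 2.

Lemma S1E m : (m <= n * N)%N ->
  \sum_(g in G) (Xcount h m g)%:R = Gm / N%:R * m%:R.
Proof.
move=> hm.
under eq_bigr do rewrite Xcount_sum.
rewrite exchange_big /=.
under eq_bigr do rewrite hm1.
by rewrite sum_lt.
Qed.

Lemma S2le m : (m <= n * N)%N ->
  \sum_(g in G) (Xcount h m g)%:R ^+ 2 <=
    Gm / N%:R * m%:R + Gm * C / N%:R ^+ 2 * m%:R ^+ 2.
Proof.
move=> hm.
under eq_bigr do rewrite expr2 Xcount_sum big_distrl /=.
under eq_bigr do under eq_bigr do rewrite big_distrr /=.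
rewrite exchange_big /=.
under eq_bigr do rewrite exchange_big /=.
have Hpt : forall k : 'I_(n * N), (k < m)%N ->
  \sum_(k' : 'I_(n * N) | (k' < m)%N) \sum_(g in G)
    ((g (h k).1 == (h k).2)%:R * (g (h k').1 == (h k').2)%:R) <=
  Gm / N%:R + Gm * C / N%:R ^+ 2 * m%:R.
  move=> k hk.
  apply: le_trans (_ : \sum_(k' : 'I_(n * N) | (k' < m)%N)
     ((k' == k)%:R * (Gm / N%:R) + Gm * C / N%:R ^+ 2) <= _).
    apply: ler_sum => k' _.
    have H0 : 0 <= Gm * C / N%:R ^+ 2.
      by apply: divr_ge0; [apply: mulr_ge0 | apply: exprn_ge0].
    case: (eqVneq k' k) => [->|nk].
      under eq_bigr do rewrite -natrM mulnb andbb.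
      by rewrite hm1 mul1r lerDl.
    rewrite mul0r add0r.
    under eq_bigr do rewrite -natrM mulnb.
    apply: hp1; rewrite -!surjective_pairing.
    by apply/negP => /eqP /hinj E; move: nk; rewrite E eqxx.
  rewrite big_split /= sum_lt //.
  rewrite (bigD1 k) //= eqxx mul1r big1 ?addr0 //.
  by move=> k' /andP [_ /negbTE ->]; rewrite mul0r.
apply: le_trans (_ : \sum_(k : 'I_(n * N) | (k < m)%N)
   (Gm / N%:R + Gm * C / N%:R ^+ 2 * m%:R) <= _).
  by apply: ler_sum => k hk; apply: Hpt.
rewrite sum_lt //; rewrite le_eqVlt; apply/orP; left; apply/eqP; ring.
Qed.

Lemma pt_b (b y lam : R) : (b == 0) || (b == 1) -> 0 < lam ->
  b * y <= y ^+ 2 / (2 * lam) + lam / 2 * b.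
Proof.
move=> /orP [/eqP -> | /eqP ->] hl.
  rewrite !mul0r mulr0 addr0; apply: divr_ge0; [apply: sqr_ge0 | lra].
rewrite mul1r mulr1.
set mu := (2 * lam)^-1.
have hmu : mu * lam = 1 / 2.
  by rewrite /mu; field; rewrite gt_eqF.
have hmu0 : 0 <= mu by rewrite /mu invr_ge0; lra.
have := mulr_ge0 (sqr_ge0 (y - lam)) hmu0.
have e1 : y * (mu * lam) = y / 2 by rewrite hmu; field.
have e2 : lam * (mu * lam) = lam / 2 by rewrite hmu; field.
nra.
Qed.

Lemma Tlow t m : (1 <= t)%N ->
  \sum_(g in G) (Xcount h m g)%:R <=
  \sum_(g in G) ((t <= Xcount h m g)%N)%:R * (Xcount h m g)%:R + Gm * (t.-1)%:R.
Proof.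
move=> ht.
have -> : Gm * (t.-1)%:R = \sum_(g in G) (t.-1)%:R by rewrite sumr_const mulr_natl.
rewrite -big_split /=; apply: ler_sum => g _.
case: (leqP t (Xcount h m g)) => H.
  by rewrite mul1r lerDl ler0n.
rewrite mul0r add0r ler_nat; lia.
Qed.

Lemma Tup t m (lam : R) : 0 < lam ->
  \sum_(g in G) ((t <= Xcount h m g)%N)%:R * (Xcount h m g)%:R <=
  (\sum_(g in G) (Xcount h m g)%:R ^+ 2) / (2 * lam) +
    lam / 2 * \sum_(g in G) ((t <= Xcount h m g)%N)%:R.
Proof.
move=> hl; rewrite mulr_suml mulr_sumr -big_split /=; apply: ler_sum => g _.
apply: pt_b => //; case: leqP => _; rewrite /= ?mulr1n ?mulr0n eqxx ?orbT //.
Qed.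

End Aux.

Lemma key (R : realFieldType) (L U T S2 B : R) : 0 < L -> 0 < U -> L <= T -> S2 <= U ->
  (forall lam, 0 < lam -> T <= S2 / (2 * lam) + lam / 2 * B) -> L ^+ 2 <= U * B.
Proof.
move=> hL hU hLT hS H.
have := H (U / L) (divr_gt0 hU hL).
have h1 : S2 / (2 * (U / L)) <= L / 2.
  have -> : L / 2 = U / (2 * (U / L)) by field; rewrite !gt_eqF.
  apply: ler_wpM2r => //; rewrite invr_ge0; apply: mulr_ge0 => //.
  by apply: divr_ge0; apply: ltW.
have h2 : U / L / 2 * B * (2 * L) = U * B by field; rewrite gt_eqF.
set q := U / L / 2 * B in h2 *.
move=> h3.
have h4 : L / 2 <= q by lra.
nra.
Qed.

Lemma arith (R : realFieldType) (Gm mu C p W : R) : 0 < Gm -> 0 < mu ->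
  (Gm * W) ^+ 2 <= Gm * (mu + C * mu ^+ 2) * (p * Gm) ->
  W ^+ 2 <= mu * ((1 + C * mu) * p).
Proof.
move=> hG hmu H.
have e1 : (Gm * W) ^+ 2 = (Gm * Gm) * W ^+ 2 by ring.
have e2 : Gm * (mu + C * mu ^+ 2) * (p * Gm) = (Gm * Gm) * (mu * ((1 + C * mu) * p)) by ring.
rewrite e1 e2 in H.
by rewrite -(ler_pM2l (mulr_gt0 hG hG)).
Qed.

Theorem lemma3p3 (R : realFieldType) (n N : nat)
  (G : {set {ffun 'I_n -> 'I_N}}) (CG : R)
  (hG0 : G != set0)
  (hCG : 1 <= CG)
  (hmarg : forall (i : 'I_n) (j : 'I_N),
      Prob R G (fun g => g i == j) = 1 / N%:R)
  (hpair : forall (i1 i2 : 'I_n) (j1 j2 : 'I_N), (i1, j1) != (i2, j2) ->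
      Prob R G (fun g => (g i1 == j1) && (g i2 == j2)) <= CG / (N%:R ^+ 2))
  (l : nat) (hl1 : (1 <= l)%N) (hln : (l <= n)%N)
  (a : 'M[R]_(n, N)) (ha0 : forall i j, 0 <= a i j)
  (h : 'I_(n * N) -> 'I_n * 'I_N) (hbij : bijective h)
  (hdec : forall (k k' : 'I_(n * N)), (k' = k.+1 :> nat) -> (k.+1 < l * N)%N ->
      a (h k').1 (h k').2 <= a (h k).1 (h k).2)
  (hzero : forall k : 'I_(n * N), (l * N <= k)%N -> a (h k).1 (h k).2 = 0) :
  (forall m : nat, (1 <= m)%N -> (m <= n * N)%N ->
     Prob R G (fun g => (1 <= Xcount h m g)%N) >=
       Num.min (m%:R / (2 * N%:R)) (1 / (2 * CG)) *
       Prob R G (fun g => (1 <= Xcount h (l * N) g)%N))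
  /\
  (forall k m : nat, (2 * k * N <= m)%N -> (m <= n * N)%N ->
     Prob R G (fun g => (k <= Xcount h m g)%N) >=
       Prob R G (fun g => (k <= Xcount h (l * N) g)%N) / (2 + 4 * CG)).
Proof.
set Gm := (#|G|)%:R : R.
have hGp : 0 < Gm by rewrite /Gm ltr0n card_gt0.
have hC0 : 0 <= CG by lra.
have hinj := bij_inj hbij.
have PE : forall P, Prob R G P = (\sum_(g in G) (P g)%:R) / Gm.
  by move=> P; rewrite /Prob card_sum.
have hm1 : forall i j, \sum_(g in G) (g i == j)%:R = Gm / N%:R.
  move=> i j; have := hmarg i j; rewrite PE => E.
  by rewrite -(divfK (lt0r_neq0 hGp) (\sum_(g in G) _)) E mul1r mulrC.
have hp1 : forall (i1 i2 : 'I_n) (j1 j2 : 'I_N), (i1, j1) != (i2, j2) ->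
    \sum_(g in G) ((g i1 == j1) && (g i2 == j2))%:R <= Gm * CG / N%:R ^+ 2.
  move=> i1 i2 j1 j2 ne; have := hpair _ _ _ _ ne; rewrite PE => E.
  rewrite -(divfK (lt0r_neq0 hGp) (\sum_(g in G) _)).
  apply: le_trans (ler_wpM2r (ltW hGp) E) _.
  by rewrite mulrC mulrA.
have P01 : forall P, 0 <= Prob R G P <= 1.
  move=> P; rewrite /Prob; apply/andP; split.
    by apply: divr_ge0.
  rewrite ler_pdivrMr // mul1r ler_nat; apply: subset_leq_card.
  by apply/subsetP => g; rewrite inE => /andP [].
split.
- move=> m hm0 hm.
  have hN : (0 < N)%N by rewrite lt0n; apply/eqP => N0; move: hm; rewrite N0 muln0; lia.
  have hNr : 0 < N%:R :> R by rewrite ltr0n.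
  pose mu : R := m%:R / N%:R.
  have hmu : 0 < mu by apply: divr_gt0 => //; rewrite ltr0n.
  have Tl := Tlow R n N h G CG hC0 1 m (leqnn 1).
  have S1 := S1E R n N h G hm1 m hm.
  have S2 := S2le R n N h G CG hC0 hinj hm1 hp1 m hm.
  set T := \sum_(g in G) _ * _ in Tl.
  pose B : R := \sum_(g in G) ((1 <= Xcount h m g)%N)%:R.
  have K := @key R (Gm * mu) (Gm * (mu + CG * mu ^+ 2)) T _ B.
  have K' : (Gm * mu) ^+ 2 <= Gm * (mu + CG * mu ^+ 2) * B.
    apply: K.
    - by apply: mulr_gt0.
    - apply: mulr_gt0 => //.
      have : 0 <= CG * mu ^+ 2 by apply: mulr_ge0 => //; apply: exprn_ge0; apply: ltW.
      lra.
    - move: Tl; rewrite S1 /= mulr0n mulr0 addr0 /mu.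
      by have -> : Gm / N%:R * m%:R = Gm * (m%:R / N%:R) by field; rewrite gt_eqF.
    - apply: le_trans S2 _; rewrite le_eqVlt; apply/orP; left; apply/eqP.
      by rewrite /mu; field; rewrite lt0r_neq0.
    - by move=> lam hl; apply: (Tup R n N h G 1 m lam hl).
  rewrite !PE -/B.
  pose p : R := B / Gm.
  have Bp : B = p * Gm by rewrite /p divfK // lt0r_neq0.
  have p0 : 0 <= p by rewrite /p; apply: divr_ge0; [apply: sumr_ge0 => g _; apply: ler0n | apply: ltW].
  rewrite Bp in K'.
  have A := arith R Gm mu CG p mu hGp hmu K'.
  have A' : mu <= (1 + CG * mu) * p.
    by rewrite -(ler_pM2l hmu) -expr2.
  have hmin : Num.min (m%:R / (2 * N%:R)) (1 / (2 * CG)) <= p.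
    rewrite ge_min; case: (leP (mu * CG) 1) => hc; apply/orP.
      left; have -> : m%:R / (2 * N%:R) = mu / 2 :> R by rewrite /mu; field; rewrite lt0r_neq0.
      nra.
    right; rewrite ler_pdivrMr; last lra.
    nra.
  rewrite -/p.
  have := P01 (fun g => (1 <= Xcount h (l * N) g)%N); rewrite PE => /andP [q0 q1].
  nra.
- move=> k m hkm hm.
  have qle : forall q : R, 0 <= q -> q / (2 + 4 * CG) <= q.
    by move=> q q0; rewrite ler_pdivrMr; nra.
  have same : forall m', m' = (l * N)%N ->
      Prob R G (fun g => (k <= Xcount h (l * N) g)%N) / (2 + 4 * CG) <=
      Prob R G (fun g => (k <= Xcount h m' g)%N).
    move=> m' ->; apply: qle.
    by have := P01 (fun g => (k <= Xcount h (l * N) g)%N) => /andP [].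
  case: (posnP k) => [k0|hk].
    rewrite /Prob.
    have -> : [set g in G | (k <= Xcount h m g)%N] = [set g in G | (k <= Xcount h (l * N) g)%N].
      by apply/setP => g; rewrite !inE k0.
    apply: qle; apply: divr_ge0; [apply: ler0n | exact: ltW hGp].
  case: (posnP N) => [N0|hN].
    apply: same; move: hm; rewrite N0 !muln0; lia.
  have hNr : 0 < N%:R :> R by rewrite ltr0n.
  pose mu : R := m%:R / N%:R.
  have hkr : 1 <= k%:R :> R by rewrite ler1n.
  have hmu2 : 2 * k%:R <= mu.
    have := hkm; rewrite -(ler_nat R) !natrM => H.
    by rewrite /mu ler_pdivlMr.
  have hmu : 0 < mu by lra.
  have hkp : (k.-1)%:R <= k%:R :> R by rewrite ler_nat leq_pred.
  have Tl := Tlow R n N h G CG hC0 k m hk.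
  have S1 := S1E R n N h G hm1 m hm.
  have S2 := S2le R n N h G CG hC0 hinj hm1 hp1 m hm.
  set T := \sum_(g in G) _ * _ in Tl.
  pose B : R := \sum_(g in G) ((k <= Xcount h m g)%N)%:R.
  pose W : R := mu - (k.-1)%:R.
  have hW : mu / 2 <= W by rewrite /W; lra.
  have K := @key R (Gm * W) (Gm * (mu + CG * mu ^+ 2)) T _ B.
  have K' : (Gm * W) ^+ 2 <= Gm * (mu + CG * mu ^+ 2) * B.
    apply: K.
    - by apply: mulr_gt0 => //; lra.
    - apply: mulr_gt0 => //.
      have : 0 <= CG * mu ^+ 2 by apply: mulr_ge0 => //; apply: exprn_ge0; apply: ltW.
      lra.
    - move: Tl; rewrite S1 /W.
      have -> : Gm / N%:R * m%:R = Gm * mu by rewrite /mu; field; rewrite lt0r_neq0.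
      move=> Tl; rewrite mulrBr; lra.
    - apply: le_trans S2 _; rewrite le_eqVlt; apply/orP; left; apply/eqP.
      by rewrite /mu; field; rewrite lt0r_neq0.
    - by move=> lam hl; apply: (Tup R n N h G k m lam hl).
  rewrite !PE -/B.
  pose p : R := B / Gm.
  have Bp : B = p * Gm by rewrite /p divfK // lt0r_neq0.
  have p0 : 0 <= p by rewrite /p; apply: divr_ge0; [apply: sumr_ge0 => g _; apply: ler0n | apply: ltW].
  rewrite Bp in K'.
  have A := arith R Gm mu CG p W hGp hmu K'.
  have A2 : mu / 2 * (mu / 2) <= mu * ((1 + CG * mu) * p).
    apply: le_trans A; rewrite expr2; apply: ler_pM => //; lra.
  have A3 : mu / 4 <= (1 + CG * mu) * p.
    rewrite -(ler_pM2l hmu); nra.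
  have A4 : 1 <= (2 + 4 * CG) * p.
    nra.
  rewrite -/p.
  have := P01 (fun g => (k <= Xcount h (l * N) g)%N); rewrite PE => /andP [q0 q1].
  rewrite ler_pdivrMr; last lra.
  nra.
Qed.
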